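(* Let $\xi\in\mathbb{R}\setminus\{0\}$. (i) If either $|B|\ge|B|_c$, or $|B|<|B|_c$ and $|\xi|\le|\xi|^B_{vc}$, then $\alpha(s)\ge0$ for every $s\ge0$. (ii) If $|B|<|B|_c$ and $|\xi|>|\xi|^B_{vc}$, then there exists $s_0>0$ depending on $\rho_\pm,\mu_\pm,g,|B|,|\xi|$ such that $\alpha(s)<0$ for all $0<s\le s_0$.
   Context: $g>0$, $\rho_+>\rho_->0$, $[\rho]=\rho_+-\rho_-$, $\mu_\pm>0$, $B\ne0$; $\rho,\mu$ equal $\rho_+,\mu_+$ on $(0,1)$ and $\rho_-,\mu_-$ on $(-1,0)$. For $s\ge0$ and $\psi\in H_0^2((-1,1))$: $E_s(\psi)=\frac12\int_{-1}^1\big[s\mu(4\xi^2|\psi'|^2+|\xi^2\psi+\psi''|^2)+|B|^2(\xi^2|\psi'|^2+|\psi''|^2)\big]dx_2-\frac12\xi^2g[\rho]\psi(0)^2$, $J(\psi)=\frac12\int_{-1}^1\rho(\xi^2|\psi|^2+|\psi'|^2)dx_2$, $\alpha(s)=\inf\{E_s(\psi):\psi\in H_0^2((-1,1)),J(\psi)=1\}$. $|B|_c^2:=\sup\{g[\rho]\psi(0)^2/\int_{-1}^1|\psi'|^2: 0\ne\psi\in H_0^1((-1,1))\}$; for $|B|<|B|_c$, $(|\xi|^B_{vc})^2:=\inf\{|B|^2\int|\psi''|^2/(g[\rho]\psi(0)^2-|B|^2\int|\psi'|^2):\psi\in H_0^2((-1,1)),\ g[\rho]\psi(0)^2-|B|^2\int|\psi'|^2>0\}$.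 *)

(* Defs.v *)
From HB Require Import structures.
From mathcomp Require Import all_boot all_order all_algebra.
From mathcomp Require Import all_classical all_reals all_analysis.
Set Implicit Arguments. Unset Strict Implicit. Unset Printing Implicit Defensive.
Import Order.TTheory GRing.Theory Num.Theory.
Import numFieldNormedType.Exports.
Local Open Scope classical_set_scope.
Local Open Scope ring_scope.

Section Defs.
Variable R : realType.
Let mu := (@lebesgue_measure R).

Definition Rint (a b : R) (f : R -> R) : R := Rintegral mu `[a, b] f.

(* Sobolev space H^1_0((-1,1)) in one dimension: psi is absolutely continuous
   with weak derivative psi1 in L^2(-1,1), and psi(-1) = psi(1) = 0. *)
Definition H01 (psi psi1 : R -> R) : Prop :=
  mu.-integrable `[-1, 1] (EFin \o psi1) /\
  mu.-integrable `[-1, 1] (fun x => (psi1 x ^+ 2)%:E) /\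
  (forall x, -1 <= x <= 1 -> psi x = Rint (-1) x psi1) /\
  psi 1 = 0.

(* Sobolev space H^2_0((-1,1)): psi, psi1 = psi' absolutely continuous,
   psi2 = psi'' in L^2(-1,1), psi(+-1) = psi'(+-1) = 0. *)
Definition H02 (psi psi1 psi2 : R -> R) : Prop :=
  mu.-integrable `[-1, 1] (EFin \o psi2) /\
  mu.-integrable `[-1, 1] (fun x => (psi2 x ^+ 2)%:E) /\
  (forall x, -1 <= x <= 1 -> psi1 x = Rint (-1) x psi2) /\
  (forall x, -1 <= x <= 1 -> psi x = Rint (-1) x psi1) /\
  psi1 1 = 0 /\ psi 1 = 0.

Definition pw (cp cm : R) (x : R) : R := if 0 < x then cp else cm.

Definition Efun (g rp rm mp mm B xi s : R) (psi psi1 psi2 : R -> R) : R :=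
  2^-1 * Rint (-1) 1 (fun x =>
      s * pw mp mm x * (4 * xi ^+ 2 * psi1 x ^+ 2 + (xi ^+ 2 * psi x + psi2 x) ^+ 2)
    + `|B| ^+ 2 * (xi ^+ 2 * psi1 x ^+ 2 + psi2 x ^+ 2))
  - 2^-1 * xi ^+ 2 * g * (rp - rm) * psi 0 ^+ 2.

Definition Jfun (rp rm xi : R) (psi psi1 : R -> R) : R :=
  2^-1 * Rint (-1) 1 (fun x => pw rp rm x * (xi ^+ 2 * psi x ^+ 2 + psi1 x ^+ 2)).

Definition alpha (g rp rm mp mm B xi s : R) : \bar R :=
  ereal_inf [set r | exists psi psi1 psi2, H02 psi psi1 psi2 /\
     Jfun rp rm xi psi psi1 = 1 /\ r = (Efun g rp rm mp mm B xi s psi psi1 psi2)%:E].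

Definition Bc2 (g rp rm : R) : \bar R :=
  ereal_sup [set r | exists psi psi1, H01 psi psi1 /\
     (exists x, -1 <= x <= 1 /\ psi x != 0) /\
     r = (g * (rp - rm) * psi 0 ^+ 2 / Rint (-1) 1 (fun x => psi1 x ^+ 2))%:E].

Definition xivc2 (g rp rm B : R) : \bar R :=
  ereal_inf [set r | exists psi psi1 psi2, H02 psi psi1 psi2 /\
     0 < g * (rp - rm) * psi 0 ^+ 2 - `|B| ^+ 2 * Rint (-1) 1 (fun x => psi1 x ^+ 2) /\
     r = (`|B| ^+ 2 * Rint (-1) 1 (fun x => psi2 x ^+ 2) /
          (g * (rp - rm) * psi 0 ^+ 2 - `|B| ^+ 2 * Rint (-1) 1 (fun x => psi1 x ^+ 2)))%:E].
End Defs.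

(* Main.v *)
Require Import Defs.
From HB Require Import structures.
From mathcomp Require Import all_boot all_order all_algebra.
From mathcomp Require Import all_classical all_reals all_analysis.
From mathcomp Require Import measurable_realfun.
From mathcomp Require Import ring lra.
Import Order.TTheory GRing.Theory Num.Theory.
Import numFieldNormedType.Exports.
Local Open Scope classical_set_scope.
Local Open Scope ring_scope.

Local Notation mu := (@lebesgue_measure _).

Definition II (R : realType) : set R := `[-1, 1].

Definition rint {R : realType} (f : R -> R) :=
  (@lebesgue_measure R).-integrable (II R) (EFin \o f).

Lemma mI {R : realType} : measurable (II R).
Proof. exact: measurable_itv. Qed.

Lemma muI {R : realType} : (@lebesgue_measure R (II R) < +oo)%E.
Proof. by rewrite /II lebesgue_measure_itv/= ifT ?ltry// lte_fin; lra. Qed.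

Lemma bnd_of {R : realType} {A : set R} {f : R -> R} {K : R} :
  (forall x, A x -> `|f x| <= K) -> [bounded f x | x in A].
Proof.
move=> h; exists K; split; first exact: num_real.
by move=> M KM x Ax; apply: le_trans (h x Ax) (ltW KM).
Qed.

Lemma rint_bnd {R : realType} (f : R -> R) (K : R) :
  measurable_fun (II R) f -> (forall x, (II R) x -> `|f x| <= K) -> rint f.
Proof.
move=> mf hK; apply: (@measurable_bounded_integrable _ _ R (@lebesgue_measure R) f (II R) mI) => //; [exact: muI | exact: bnd_of hK].
Qed.

Lemma rintD {R : realType} {f h : R -> R} : rint f -> rint h -> rint (fun x => f x + h x).
Proof.
rewrite /rint => i1 i2; have := integrableD _ i1 i2; move=> /(_ (measurable_itv _)).
exact.
Qed.

Lemma rintZ {R : realType} (k : R) {f : R -> R} : rint f -> rint (fun x => k * f x).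
Proof.
rewrite /rint => i1; have := integrableZl _ k i1; move=> /(_ (measurable_itv _)).
exact.
Qed.

Lemma rintM {R : realType} {h f : R -> R} (K : R) : measurable_fun (II R) h ->
  (forall x, (II R) x -> `|h x| <= K) -> rint f -> rint (fun x => h x * f x).
Proof.
rewrite /rint => mh hK i1; have := integrableMr _ (mh : measurable_fun (T:=measurableTypeR R) (II R) h) (bnd_of hK) i1; move=> /(_ (measurable_itv _)).
exact.
Qed.

Lemma rint_ext {R : realType} (f h : R -> R) : (forall x, f x = h x) -> rint f -> rint h.
Proof. by move=> e; have -> : f = h by apply/funext. Qed.
Lemma absbnd {R : realType} (a b c : R) : b <= a -> a <= c -> `|a| <= `|c| + `|b|.
Proof.
move=> h1 h2; have := ler_norm c; have := ler_norm (-b); rewrite normrN => e1 e2.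
have := normr_ge0 b; have := normr_ge0 c => e3 e4.
rewrite ler_norml; apply/andP; split; lra.
Qed.


Lemma prim_props {R : realType} (f : R -> R) : rint f ->
  measurable_fun (II R) (fun x => Defs.Rint (-1) x f) /\
  exists K : R, forall x, II R x -> `|Defs.Rint (-1) x f| <= K.
Proof.
move=> intf.
have c : {within `[-1, 1], continuous (fun x => Defs.Rint (-1) x f)}.
  exact: (@parameterized_integral_continuous R (-1) 1 f _ intf).
split.
  exact: (measurable_realfun.subspace_continuous_measurable_fun mI c).
have le11 : (-1 : R) <= 1 by lra.
have [c1 c1I h1] := @EVT_max R _ (-1) 1 le11 c.
have [c2 c2I h2] := @EVT_min R _ (-1) 1 le11 c.
exists (`|Defs.Rint (-1) c1 f| + `|Defs.Rint (-1) c2 f|) => x Ix.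
exact: absbnd (h2 x Ix) (h1 x Ix).
Qed.

Lemma toI {R : realType} (x : R) : II R x -> -1 <= x <= 1.
Proof. by rewrite /II /= in_itv. Qed.

Lemma ofI {R : realType} (x : R) : -1 <= x <= 1 -> II R x.
Proof. by rewrite /II /= in_itv. Qed.

Lemma rint_meas {R : realType} (f : R -> R) : rint f -> measurable_fun (II R) f.
Proof.
rewrite /rint => /(measurable_int (@lebesgue_measure R)) /measurable_EFinP.
exact.
Qed.

Lemma eqI_meas {R : realType} (f g : R -> R) : (forall x, II R x -> f x = g x) ->
  measurable_fun (II R) f -> measurable_fun (II R) g.
Proof.
move=> e; apply: eq_measurable_fun => x; rewrite inE => Ix; exact: e.
Qed.

Lemma H02_props {R : realType} {psi psi1 psi2 : R -> R} : H02 psi psi1 psi2 ->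
  [/\ rint psi2, rint (fun x => psi2 x ^+ 2), rint psi1,
     measurable_fun (II R) psi &
     (measurable_fun (II R) psi1 /\ measurable_fun (II R) psi2 /\
     exists K : R, forall x, II R x -> `|psi x| <= K /\ `|psi1 x| <= K)].
Proof.
move=> [i2 [i22 [e1 [e0 _]]]].
have i2' : rint psi2 by [].
have [m2 [K2 hK2]] := prim_props _ i2'.
have m1 : measurable_fun (II R) psi1.
  by apply: eqI_meas m2 => x /toI Ix; rewrite e1.
have b1 : forall x, II R x -> `|psi1 x| <= K2 by move=> x Ix; rewrite e1 ?hK2 //; exact: toI.
have i1 : rint psi1 by exact: rint_bnd m1 b1.
have [m0 [K0 hK0]] := prim_props _ i1.
have m0' : measurable_fun (II R) psi.
  by apply: eqI_meas m0 => x /toI Ix; rewrite e0.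
have b0 : forall x, II R x -> `|psi x| <= K0 by move=> x Ix; rewrite e0 ?hK0 //; exact: toI.
split => //; split => //; split; first exact: rint_meas.
exists (K0 + K2) => x Ix; have := b0 x Ix; have := b1 x Ix.
have := normr_ge0 (psi x); have := normr_ge0 (psi1 x); move=> *; split; lra.
Qed.

Local Notation RI f := (Defs.Rint (-1) 1 f).

Lemma RiD {R : realType} (f h : R -> R) : rint f -> rint h ->
  RI (fun x => f x + h x) = RI f + RI h.
Proof. by move=> i1 i2; rewrite /Defs.Rint RintegralD //; exact: measurable_itv. Qed.

Lemma RiZ {R : realType} (k : R) (f : R -> R) : rint f ->
  RI (fun x => k * f x) = k * RI f.
Proof. by move=> i1; rewrite /Defs.Rint RintegralZl //; exact: measurable_itv. Qed.

Lemma Ri_ge0 {R : realType} (f : R -> R) : (forall x, II R x -> 0 <= f x) -> 0 <= RI f.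
Proof. by move=> h; rewrite /Defs.Rint Rintegral_ge0. Qed.

Lemma Ri_le {R : realType} (f h : R -> R) : rint f -> rint h ->
  (forall x, II R x -> f x <= h x) -> RI f <= RI h.
Proof. by move=> i1 i2 fh; rewrite /Defs.Rint le_Rintegral //; exact: measurable_itv. Qed.

Lemma Ri_ext {R : realType} (f h : R -> R) : (forall x, II R x -> f x = h x) -> RI f = RI h.
Proof. by move=> e; rewrite /Defs.Rint; apply: eq_Rintegral => x; rewrite inE => Ix; exact: e. Qed.

Lemma pw_meas {R : realType} (cp cm : R) : measurable_fun (II R) (pw cp cm).
Proof.
apply: measurable_funTS; apply: measurable_fun_ifT => //.
exact: (measurable_fun_ltr (measurable_cst _) (@measurable_id _ _ _)).
Qed.

Lemma pw_bnd {R : realType} (cp cm : R) x : `|pw cp cm x| <= `|cp| + `|cm|.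
Proof.
have := normr_ge0 cp; have := normr_ge0 cm; rewrite /pw; case: ifP => _ *; lra.
Qed.

Lemma sq_bnd {R : realType} (a K : R) : `|a| <= K -> `|a ^+ 2| <= K ^+ 2.
Proof. by move=> h; have := normr_ge0 a; rewrite normrX => h0; nra. Qed.

Lemma H02_rint {R : realType} {psi psi1 psi2 : R -> R} : H02 psi psi1 psi2 ->
  [/\ rint (fun x => psi1 x ^+ 2), rint (fun x => psi2 x ^+ 2),
      rint (fun x => psi x ^+ 2) & rint (fun x => psi x * psi2 x)].
Proof.
move=> H; have [i2 i22 i1 m0 [m1 [m2 [K hK]]]] := H02_props H.
split => //.
- apply: (@rint_bnd _ _ (K ^+ 2)); first exact: measurable_funX.
  by move=> x Ix; apply: sq_bnd; case: (hK x Ix).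
- apply: (@rint_bnd _ _ (K ^+ 2)); first exact: measurable_funX.
  by move=> x Ix; apply: sq_bnd; case: (hK x Ix).
- by apply: (@rintM _ _ _ K) => // x Ix; case: (hK x Ix).
Qed.

Definition Qf {R : realType} (xi : R) (psi psi1 psi2 : R -> R) x :=
  4 * xi ^+ 2 * psi1 x ^+ 2 + (xi ^+ 2 * psi x + psi2 x) ^+ 2.

Lemma rint_pwQ {R : realType} (cp cm xi : R) {psi psi1 psi2 : R -> R} : H02 psi psi1 psi2 ->
  rint (fun x => pw cp cm x * Qf xi psi psi1 psi2 x).
Proof.
move=> H; have [r1 r2 r0 r02] := H02_rint H.
apply: (@rintM _ _ _ (`|cp| + `|cm|)); [exact: pw_meas | by move=> x _; exact: pw_bnd |].
have := rintD (rintD (rintD (rintZ (4 * xi ^+ 2) r1) (rintZ (xi ^+ 4) r0))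
   (rintZ (2 * xi ^+ 2) r02)) r2.
by apply: rint_ext => x; rewrite /Qf; ring.
Qed.

Lemma rint_pwJ {R : realType} (cp cm xi : R) {psi psi1 psi2 : R -> R} : H02 psi psi1 psi2 ->
  rint (fun x => pw cp cm x * (xi ^+ 2 * psi x ^+ 2 + psi1 x ^+ 2)).
Proof.
move=> H; have [r1 r2 r0 r02] := H02_rint H.
apply: (@rintM _ _ _ (`|cp| + `|cm|)); [exact: pw_meas | by move=> x _; exact: pw_bnd |].
exact: rintD (rintZ _ r0) r1.
Qed.

Definition Sf {R : realType} (mp mm xi : R) (psi psi1 psi2 : R -> R) :=
  RI (fun x => pw mp mm x * Qf xi psi psi1 psi2 x).

Definition Eint {R : realType} (mp mm B xi s : R) (psi psi1 psi2 : R -> R) x :=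
  s * pw mp mm x * (4 * xi ^+ 2 * psi1 x ^+ 2 + (xi ^+ 2 * psi x + psi2 x) ^+ 2)
    + `|B| ^+ 2 * (xi ^+ 2 * psi1 x ^+ 2 + psi2 x ^+ 2).

Lemma rint_E {R : realType} (mp mm B xi s : R) {psi psi1 psi2 : R -> R} : H02 psi psi1 psi2 ->
  rint (Eint mp mm B xi s psi psi1 psi2).
Proof.
move=> H; have [r1 r2 r0 r02] := H02_rint H.
have := rintD (rintZ s (rint_pwQ mp mm xi H)) (rintZ (`|B| ^+ 2) (rintD (rintZ (xi ^+ 2) r1) r2)).
by apply: rint_ext => x; rewrite /Eint /Qf; ring.
Qed.

Lemma Edec {R : realType} (g rp rm mp mm B xi s : R) {psi psi1 psi2 : R -> R} : H02 psi psi1 psi2 ->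
  Efun g rp rm mp mm B xi s psi psi1 psi2 =
  2^-1 * (s * Sf mp mm xi psi psi1 psi2 + `|B| ^+ 2 * (xi ^+ 2 * RI (fun x => psi1 x ^+ 2)
     + RI (fun x => psi2 x ^+ 2))) - 2^-1 * xi ^+ 2 * g * (rp - rm) * psi 0 ^+ 2.
Proof.
move=> H; have [r1 r2 r0 r02] := H02_rint H.
rewrite /Efun; congr (_ * _ - _).
rewrite (@Ri_ext _ _ (fun x => s * (pw mp mm x * Qf xi psi psi1 psi2 x) +
   `|B| ^+ 2 * (xi ^+ 2 * psi1 x ^+ 2 + psi2 x ^+ 2))); last first.
  by move=> x _; rewrite /Qf; ring.
rewrite RiD; [|exact: rintZ (rint_pwQ mp mm xi H)|exact: rintZ (rintD (rintZ _ r1) r2)].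
rewrite RiZ; last exact: rint_pwQ.
rewrite RiZ; last exact: rintD (rintZ _ r1) r2.
by rewrite RiD ?RiZ //; exact: rintZ.
Qed.

Lemma Sf_ge0 {R : realType} (mp mm xi : R) (psi psi1 psi2 : R -> R) :
  0 < mp -> 0 < mm -> 0 <= Sf mp mm xi psi psi1 psi2.
Proof.
move=> hp hm; apply: Ri_ge0 => x _; apply: mulr_ge0.
  by rewrite /pw; case: ifP => _; exact: ltW.
by rewrite /Qf; apply: addr_ge0; [apply: mulr_ge0; [apply: mulr_ge0 => //; exact: sqr_ge0|exact: sqr_ge0]|exact: sqr_ge0].
Qed.

Lemma gintD {R : realType} (D : set R) (f h : R -> R) : measurable D ->
  (@lebesgue_measure R).-integrable D (EFin \o f) -> (@lebesgue_measure R).-integrable D (EFin \o h) ->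
  (@lebesgue_measure R).-integrable D (EFin \o (fun x => f x + h x)).
Proof. by move=> mD i1 i2; have := integrableD _ i1 i2; move=> /(_ mD). Qed.

Lemma gintZ {R : realType} (D : set R) (k : R) (f : R -> R) : measurable D ->
  (@lebesgue_measure R).-integrable D (EFin \o f) ->
  (@lebesgue_measure R).-integrable D (EFin \o (fun x => k * f x)).
Proof. by move=> mD i1; have := integrableZl _ k i1; move=> /(_ mD). Qed.

Lemma CS0 {R : realType} {psi psi1 psi2 : R -> R} : H02 psi psi1 psi2 ->
  psi 0 ^+ 2 <= RI (fun x => psi1 x ^+ 2).
Proof.
move=> H; have [r1 r2 r0 r02] := H02_rint H.
have [_ _ i1 _ _] := H02_props H.
case: H => _ [_ [_ [e0 _]]].
pose J0 : set R := `[-1, 0]%classic.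
have mJ0 : measurable J0 by exact: measurable_itv.
have J0I : J0 `<=` II R.
  move=> x; rewrite /J0 /II /= !in_itv/= => /andP[a b]; apply/andP; split; lra.
have iJ : forall f : R -> R, rint f -> (@lebesgue_measure R).-integrable J0 (EFin \o f).
  by move=> f hf; apply: integrableS hf => //; exact: mI.
have muJ0 : @lebesgue_measure R J0 = 1%E.
  by rewrite /J0 lebesgue_measure_itv/= ifT ?lte_fin // add0e opprK.
set A := psi 0.
have eA : A = Rintegral (@lebesgue_measure R) J0 psi1 by rewrite /A e0 //; lra.
have iC : forall k : R, (@lebesgue_measure R).-integrable J0 (EFin \o (fun=> k)).
  move=> k; have muJ0' : (@lebesgue_measure R J0 < +oo)%E by rewrite muJ0 ltry.
  have := @measurable_bounded_integrable _ _ R (@lebesgue_measure R) (fun=> k) J0.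
  move=> /(_ mJ0 muJ0'); apply.
  - exact: (measurable_cst k : measurable_fun (T:=measurableTypeR R) J0 (fun=> k)).
  - exact: (@bnd_of _ _ _ `|k| (fun _ _ => lexx _)).
have h0 : 0 <= Rintegral (@lebesgue_measure R) J0 (fun x => (psi1 x - A) ^+ 2).
  by apply: Rintegral_ge0 => x _; exact: sqr_ge0.
rewrite (@eq_Rintegral _ _ _ (@lebesgue_measure R) J0 (fun x => (psi1 x ^+ 2 + (- 2 * A) * psi1 x) + A ^+ 2)) in h0; last first.
  by move=> x _; ring.
rewrite RintegralD // in h0; last first.
  by apply: gintD => //; [exact: iJ r1 | apply: gintZ => //; exact: iJ].
rewrite RintegralD // in h0; [|exact: iJ r1|by apply: gintZ => //; exact: iJ].
rewrite RintegralZl // in h0; last exact: iJ.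
rewrite Rintegral_cst // in h0.
set m := fine _ in h0.
have m1 : m = 1 by rewrite /m; exact: (congr1 fine muJ0).
rewrite m1 -eA in h0.
have hle : Rintegral (@lebesgue_measure R) J0 (fun x => psi1 x ^+ 2) <= RI (fun x => psi1 x ^+ 2).
  rewrite /Defs.Rint /Rintegral; apply: fine_le.
  - by apply: (integrable_fin_num _ (iJ _ r1)); exact: measurable_itv.
  - by apply: (integrable_fin_num _ r1); exact: measurable_itv.
  apply: (@ge0_subset_integral _ _ R (@lebesgue_measure R) J0 (II R)) => //.
  - exact: (measurable_itv _).
  - by case/integrableP: r1.
  - by move=> x _; rewrite lee_fin; exact: sqr_ge0.
lra.
Qed.

Lemma RsubZ {R : realType} (c x : R) (f : R -> R) : rint f -> -1 <= x <= 1 ->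
  Defs.Rint (-1) x (fun t => c * f t) = c * Defs.Rint (-1) x f.
Proof.
move=> hf /andP[a b]; rewrite /Defs.Rint (@RintegralZl _ _ R (@lebesgue_measure R) `[-1, x]%classic f c) //.
apply: (integrableS _ _ _ hf).
- exact: (measurable_itv _).
- exact: (measurable_itv _).
by move=> y; rewrite /II /= !in_itv/= => /andP[a' b']; apply/andP; split; lra.
Qed.

Lemma H02_scale {R : realType} (c : R) {psi psi1 psi2 : R -> R} : H02 psi psi1 psi2 ->
  H02 (fun x => c * psi x) (fun x => c * psi1 x) (fun x => c * psi2 x).
Proof.
move=> H; have [i2 i22 i1 _ _] := H02_props H.
case: H => _ [_ [e1 [e0 [b1 b0]]]].
split; first exact: (rintZ c i2).
split.
  have h : rint (fun x => (c * psi2 x) ^+ 2).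
    by apply: (@rint_ext _ _ _ _ (rintZ (c ^+ 2) i22)) => x; ring.
  exact: h.
split; first by move=> x hx; rewrite e1 // RsubZ.
split; first by move=> x hx; rewrite e0 // RsubZ.
by rewrite b1 b0 mulr0.
Qed.

Lemma EfunE {R : realType} (g rp rm mp mm B xi s : R) (psi psi1 psi2 : R -> R) :
  Efun g rp rm mp mm B xi s psi psi1 psi2 =
  2^-1 * RI (Eint mp mm B xi s psi psi1 psi2) - 2^-1 * xi ^+ 2 * g * (rp - rm) * psi 0 ^+ 2.
Proof. by []. Qed.

Definition Jint {R : realType} (rp rm xi : R) (psi psi1 : R -> R) x :=
  pw rp rm x * (xi ^+ 2 * psi x ^+ 2 + psi1 x ^+ 2).

Lemma JfunE {R : realType} (rp rm xi : R) (psi psi1 : R -> R) :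
  Jfun rp rm xi psi psi1 = 2^-1 * RI (Jint rp rm xi psi psi1).
Proof. by []. Qed.

Lemma E_scale {R : realType} (g rp rm mp mm B xi s c : R) {psi psi1 psi2 : R -> R} :
  H02 psi psi1 psi2 ->
  Efun g rp rm mp mm B xi s (fun x => c * psi x) (fun x => c * psi1 x) (fun x => c * psi2 x) =
  c ^+ 2 * Efun g rp rm mp mm B xi s psi psi1 psi2.
Proof.
move=> H; rewrite !EfunE (@Ri_ext _ _ (fun x => c ^+ 2 * Eint mp mm B xi s psi psi1 psi2 x)).
  by rewrite RiZ; [ring | exact: rint_E].
by move=> x _; rewrite /Eint; ring.
Qed.

Lemma J_scale {R : realType} (rp rm xi c : R) {psi psi1 psi2 : R -> R} :
  H02 psi psi1 psi2 ->
  Jfun rp rm xi (fun x => c * psi x) (fun x => c * psi1 x) = c ^+ 2 * Jfun rp rm xi psi psi1.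
Proof.
move=> H; rewrite !JfunE (@Ri_ext _ _ (fun x => c ^+ 2 * Jint rp rm xi psi psi1 x)).
  by rewrite RiZ; [ring | exact: (rint_pwJ rp rm xi H)].
by move=> x _; rewrite /Jint; ring.
Qed.

Lemma J_pos {R : realType} (rp rm xi : R) {psi psi1 psi2 : R -> R} :
  H02 psi psi1 psi2 -> 0 < rm -> rm < rp -> psi 0 != 0 -> 0 < Jfun rp rm xi psi psi1.
Proof.
move=> H hm hp p0; have [r1 r2 r0 r02] := H02_rint H.
have cs := CS0 H.
have h1 : RI (fun x => rm * psi1 x ^+ 2) <= RI (Jint rp rm xi psi psi1).
  apply: Ri_le; [exact: rintZ | exact: (rint_pwJ rp rm xi H) |].
  move=> x _; rewrite /Jint /pw; have := sqr_ge0 (psi x); have := sqr_ge0 (psi1 x).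
  have := sqr_ge0 xi => *.
  have hx : 0 <= xi ^+ 2 * psi x ^+ 2 by exact: mulr_ge0.
  by case: ifP => _; nra.
rewrite RiZ // in h1.
have : 0 < psi 0 ^+ 2 by rewrite lt_neqAle sqr_ge0 andbT eq_sym sqrf_eq0.
rewrite JfunE; nra.
Qed.

Lemma E_eq {R : realType} (g rp rm mp mm B xi s : R) {psi psi1 psi2 : R -> R} : H02 psi psi1 psi2 ->
  Efun g rp rm mp mm B xi s psi psi1 psi2 =
  2^-1 * s * Sf mp mm xi psi psi1 psi2 + 2^-1 * (`|B| ^+ 2 * RI (fun x => psi2 x ^+ 2) -
    xi ^+ 2 * (g * (rp - rm) * psi 0 ^+ 2 - `|B| ^+ 2 * RI (fun x => psi1 x ^+ 2))).
Proof. by move=> H; rewrite (Edec g rp rm mp mm B xi s H); ring. Qed.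

Lemma D_le0_of0 {R : realType} (g rp rm B : R) (psi psi1 : R -> R) : psi 0 = 0 ->
  g * (rp - rm) * psi 0 ^+ 2 - `|B| ^+ 2 * RI (fun x => psi1 x ^+ 2) <= 0.
Proof.
move=> ->; rewrite expr0n /= mulr0 sub0r oppr_le0; apply: mulr_ge0; first exact: sqr_ge0.
by apply: Ri_ge0 => x _; exact: sqr_ge0.
Qed.

Theorem lemma3p4 (R : realType) (g rp rm mp mm B xi : R) :
  0 < g -> 0 < rm -> rm < rp -> 0 < mp -> 0 < mm -> B != 0 -> xi != 0 ->
  (* (i) *)
  ((Bc2 g rp rm <= (`|B| ^+ 2)%:E)%E \/
   ((`|B| ^+ 2)%:E < Bc2 g rp rm /\ ((xi ^+ 2)%:E <= xivc2 g rp rm B))%E ->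
   forall s : R, 0 <= s -> (0%:E <= alpha g rp rm mp mm B xi s)%E) /\
  (* (ii) *)
  (((`|B| ^+ 2)%:E < Bc2 g rp rm)%E -> ((xivc2 g rp rm B < (xi ^+ 2)%:E))%E ->
   exists s0 : R, 0 < s0 /\
     forall s : R, 0 < s -> s <= s0 -> (alpha g rp rm mp mm B xi s < 0%:E)%E).
Proof.
move=> hg hm hrp hmp hmm hB hxi.
have hxi2 : 0 <= xi ^+ 2 by exact: sqr_ge0.
have hB2 : 0 <= `|B| ^+ 2 by exact: sqr_ge0.
have hgr : 0 < g * (rp - rm) by apply: mulr_gt0 => //; rewrite subr_gt0.
split.
- move=> hyp s hs; apply: le_ereal_inf_tmp => _ [psi [psi1 [psi2 [H [HJ ->]]]]].
  rewrite lee_fin.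
  have [r1 r2 r0 r02] := H02_rint H.
  have [_ _ i1 _ _] := H02_props H.
  have HH := H; case: HH => _ [_ [_ [e0 [_ b0]]]].
  have hI2 : 0 <= RI (fun x => psi2 x ^+ 2) by apply: Ri_ge0 => x _; exact: sqr_ge0.
  have hI1 : 0 <= RI (fun x => psi1 x ^+ 2) by apply: Ri_ge0 => x _; exact: sqr_ge0.
  set I1 := RI (fun x => psi1 x ^+ 2) in hI1 *.
  set I2 := RI (fun x => psi2 x ^+ 2) in hI2 *.
  set D := g * (rp - rm) * psi 0 ^+ 2 - `|B| ^+ 2 * I1.
  have key : xi ^+ 2 * D <= `|B| ^+ 2 * I2.
    have hD0 : D <= 0 -> xi ^+ 2 * D <= `|B| ^+ 2 * I2.
      move=> hD; apply: (@le_trans _ _ 0); last exact: mulr_ge0.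
      exact: mulr_ge0_le0.
    case: hyp => [hBc | [_ hxv]].
    + apply: hD0.
      have [p0|p0] := eqVneq (psi 0) 0; first exact: D_le0_of0.
      have cs := CS0 H.
      have p0pos : 0 < psi 0 ^+ 2 by rewrite lt_neqAle sqr_ge0 andbT eq_sym sqrf_eq0.
      have I1pos : 0 < I1 by exact: lt_le_trans cs.
      have hr : ((g * (rp - rm) * psi 0 ^+ 2 / I1)%:E <= Bc2 g rp rm)%E.
        apply: ereal_sup_ubound; exists psi, psi1; split.
          by split => //; split => //; split.
        by split => //; exists 0; split => //; lra.
      have := le_trans hr hBc; rewrite lee_fin ler_pdivrMr // => h.
      rewrite /D; lra.
    + have [hD|hD] := lerP D 0; first exact: hD0.
      have hr : (xivc2 g rp rm B <= (`|B| ^+ 2 * I2 / D)%:E)%E.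
        by apply: ereal_inf_lbound; exists psi, psi1, psi2; split.
      have := le_trans hxv hr; rewrite lee_fin ler_pdivlMr // => h.
  rewrite (E_eq g rp rm mp mm B xi s H) -/I1 -/I2 -/D.
  have := mulr_ge0 hs (Sf_ge0 mp mm xi psi psi1 psi2 hmp hmm).
  lra.
- move=> _ hlt.
  have [_ [psi [psi1 [psi2 [H [hD ->]]]]] hy] := ereal_inf_lt hlt.
  rewrite lte_fin in hy.
  set I1 := RI (fun x => psi1 x ^+ 2) in hD hy *.
  set I2 := RI (fun x => psi2 x ^+ 2) in hy *.
  set D := g * (rp - rm) * psi 0 ^+ 2 - `|B| ^+ 2 * I1 in hD hy *.
  rewrite ltr_pdivrMr // in hy.
  set N := `|B| ^+ 2 * I2 - xi ^+ 2 * D.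
  have hN : N < 0 by rewrite /N; lra.
  have p0 : psi 0 != 0.
    apply/eqP => p0; have := D_le0_of0 g rp rm B psi psi1 p0; rewrite -/I1 -/D; lra.
  have hJ := J_pos rp rm xi H hm hrp p0.
  set J := Jfun rp rm xi psi psi1 in hJ.
  set c := (Num.sqrt J)^-1.
  have c2 : c ^+ 2 * J = 1.
    by rewrite /c exprVn sqr_sqrtr ?(ltW hJ) // mulVf // gt_eqF.
  have c2pos : 0 < c ^+ 2 by rewrite /c exprVn invr_gt0 sqr_sqrtr ?(ltW hJ).
  set S := Sf mp mm xi psi psi1 psi2.
  have hS : 0 <= S by exact: Sf_ge0.
  have hS1 : 0 < S + 1 by lra.
  exists (- N / (S + 1)); split.
    by apply: divr_gt0 => //; lra.
  move=> s hs hss.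
  apply: (@le_lt_trans _ _ ((Efun g rp rm mp mm B xi s
     (fun x => c * psi x) (fun x => c * psi1 x) (fun x => c * psi2 x))%:E)).
    apply: ereal_inf_lbound; exists (fun x => c * psi x), (fun x => c * psi1 x), (fun x => c * psi2 x).
    split; first exact: H02_scale.
    by split => //; rewrite (J_scale rp rm xi c H) -/J c2.
  rewrite lte_fin (E_scale g rp rm mp mm B xi s c H) (E_eq g rp rm mp mm B xi s H) -/S -/I1 -/I2 -/D -/N.
  have e : (- N / (S + 1)) * (S + 1) = - N by rewrite divfK // gt_eqF.
  have hsS : s * S <= (- N / (S + 1)) * S by apply: ler_wpM2r.
  have s0pos : 0 < - N / (S + 1) by apply: divr_gt0 => //; lra.
  rewrite pmulr_rlt0 //.
  nra.
Qed.
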